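(* Let $N, N_y, M, p \in \mathbb{N}$ with $p\le N$, $X \in \mathbb{R}^{N \times M}$, $Y \in \mathbb{R}^{N_y \times M}$, $\lambda \ge 0$, $\Omega=\{1,\dots,N\}$, and let $\bar s_1,\dots,\bar s_p$ and $\bar S_0\subset\cdots\subset\bar S_p$ be a greedy sequence as defined in the context. Define recursively for $k=1,\dots,p$, starting from empty matrices $\Xi^{(0)}\in\mathbb{R}^{N\times 0}$, $\Theta^{(0)}\in\mathbb{R}^{N_y\times 0}$ (with the conventions $\Xi^{(0)}(\Xi^{(0)}_{\bar s_1})^\top = 0$, $\Theta^{(0)}(\Xi^{(0)}_{\bar s_1})^\top=0$, $[\Xi^{(0)},\xi^{(1)}]=\xi^{(1)}$, $[\Theta^{(0)},\theta^{(1)}]=\theta^{(1)}$): \begin{align*} \delta^{(k)} &= X X_{\bar s_k}^\top + \lambda (I_N)_{\bar s_k}^\top - \Xi^{(k-1)}(\Xi^{(k-1)}_{\bar s_k})^\top \in\mathbb{R}^N,\\ \xi^{(k)} &= \delta^{(k)}/\sqrt{\delta^{(k)}_{\bar s_k}},\qquad \theta^{(k)} = \bigl(Y X_{\bar s_k}^\top - \Theta^{(k-1)}(\Xi^{(k-1)}_{\bar s_k})^\top\bigr)/\sqrt{\delta^{(k)}_{\bar s_k}},\\ \Xi^{(k)} &= [\Xi^{(k-1)}, \xi^{(k)}]\in\mathbb{R}^{N\times k},\qquad \Theta^{(k)} = [\Theta^{(k-1)},\theta^{(k)}]\in\mathbb{R}^{N_y\times k}. \end{align*} Then for every $k\in\{1,\dots,p\}$: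 \begin{align*} \xi^{(k)} &= (Q^{xx}_{\bar s_k}(\bar S_{k-1}))^\top (Q^{xx}_{\bar s_k,\bar s_k}(\bar S_{k-1}))^{-1/2},\\ \theta^{(k)} &= (Q^{xy}_{\bar s_k}(\bar S_{k-1}))^\top (Q^{xx}_{\bar s_k,\bar s_k}(\bar S_{k-1}))^{-1/2},\\ Q^{xx}(\bar S_k) &= Q^{xx}(\bar S_{k-1}) - \xi^{(k)}\xi^{(k)\top} = XX^\top + \lambda I_N - \Xi^{(k)}\Xi^{(k)\top},\\ Q^{xy}(\bar S_k) &= Q^{xy}(\bar S_{k-1}) - \xi^{(k)}\theta^{(k)\top} = XY^\top - \Xi^{(k)}\Theta^{(k)\top}. \end{align*}
   Context: Notation: for a matrix $A$ and an ordered index set $S$, $A_S$ is the submatrix of rows indexed by $S$, $A_{S,S}$ the principal submatrix indexed by $S$; $A_i$ is row $i$ of $A$ (a row vector), $A_{i,i}$ its $(i,i)$ entry; $v_i$ is the $i$th component of a vector $v$; $(I_N)_{s}^\top$ is the $s$th canonical unit vector. $P^{xx} = XX^\top + \lambda I_N$, $P^{xy} = XY^\top$. $Q^{xx}(\emptyset)=P^{xx}$, $Q^{xy}(\emptyset)=P^{xy}$, and for $|S|\ge1$ with $P^{xx}_{S,S}\succ0$: $Q^{xx}(S) = P^{xx} - (P^{xx}_S)^\top (P^{xx}_{S,S})^{-1} P^{xx}_S$, $Q^{xy}(S) = P^{xy} - (P^{xx}_S)^\top (P^{xx}_{S,S})^{-1} P^{xy}_S$. $J(S) = \operatorname{tr}\{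 Y X_S^\top (X_S X_S^\top + \lambda I_{|S|})^{-1} X_S Y^\top \}$ for feasible $S$, $J(\emptyset)=0$. Greedy sequence: $\bar S_0=\emptyset$; for $k=1,\dots,p$, $\mathcal{I}_k = \{ i\in\Omega\setminus\bar S_{k-1} : P^{xx}_{S',S'}\succ0,\ S'=\bar S_{k-1}\cup\{i\}\}$ (assumed nonempty), $\bar s_k \in \arg\max_{i\in\mathcal{I}_k}\{J(\bar S_{k-1}\cup\{i\}) - J(\bar S_{k-1})\}$, $\bar S_k = \bar S_{k-1}\cup\{\bar s_k\}$. *)

(* Defs.v *)
From HB Require Import structures.
From mathcomp Require Import all_boot all_order all_algebra.
From mathcomp Require Import reals.
Set Implicit Arguments. Unset Strict Implicit. Unset Printing Implicit Defensive.
Import Order.TTheory GRing.Theory Num.Theory.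
Local Open Scope ring_scope.

(* Indices Omega = {1..N} are rendered as 'I_N (0-based). Index sets S are
   {set 'I_N}; the "ordered" submatrices use the increasing enumeration
   enum_val of S (the results do not depend on the order). *)

Section Defs.
Variable R : realType.

Definition rows_of (m n : nat) (A : 'M[R]_(m, n)) (S : {set 'I_m}) : 'M[R]_(#|S|, n) :=
  \matrix_(i < #|S|, j < n) A (enum_val i) j.

Definition subsq (n : nat) (A : 'M[R]_n) (S : {set 'I_n}) : 'M[R]_#|S| :=
  \matrix_(i < #|S|, j < #|S|) A (enum_val i) (enum_val j).

Definition posdef (n : nat) (A : 'M[R]_n) : Prop :=
  A^T = A /\ forall v : 'rV[R]_n, v != 0 -> 0 < (v *m A *m v^T) 0 0.

Variables (N Ny M : nat) (X : 'M[R]_(N, M)) (Y : 'M[R]_(Ny, M)) (lam : R).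

Definition Pxx : 'M[R]_N := X *m X^T + lam%:M.
Definition Pxy : 'M[R]_(N, Ny) := X *m Y^T.

(* For S = set0 these reduce to Pxx, Pxy (empty products vanish). *)
Definition Qxx (S : {set 'I_N}) : 'M[R]_N :=
  Pxx - (rows_of Pxx S)^T *m invmx (subsq Pxx S) *m rows_of Pxx S.
Definition Qxy (S : {set 'I_N}) : 'M[R]_(N, Ny) :=
  Pxy - (rows_of Pxx S)^T *m invmx (subsq Pxx S) *m rows_of Pxy S.

Definition Jval (S : {set 'I_N}) : R :=
  \tr (Y *m (rows_of X S)^T *m invmx (rows_of X S *m (rows_of X S)^T + lam%:M)
        *m rows_of X S *m Y^T).

(* greedy sequence: s k is \bar s_k for k = 1..p; \bar S_k = {s 1, ..., s k} *)
Definition Sbar (s : nat -> 'I_N) (k : nat) : {set 'I_N} :=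
  [set x | [exists i : 'I_k, x == s i.+1]].

Definition greedy (p : nat) (s : nat -> 'I_N) : Prop :=
  forall k, (0 < k <= p)%N ->
    [/\ s k \notin Sbar s k.-1,
        posdef (subsq Pxx (s k |: Sbar s k.-1)) &
        forall i, i \notin Sbar s k.-1 -> posdef (subsq Pxx (i |: Sbar s k.-1)) ->
          Jval (i |: Sbar s k.-1) - Jval (Sbar s k.-1)
            <= Jval (s k |: Sbar s k.-1) - Jval (Sbar s k.-1)].

Definition colsmx (n k : nat) (cs : seq 'cV[R]_n) : 'M[R]_(n, k) :=
  \matrix_(i < n, j < k) (nth 0 cs j) i 0.

Fixpoint gen (s : nat -> 'I_N) (k : nat) : seq 'cV[R]_N * seq 'cV[R]_Ny :=
  match k with
  | 0 => ([::], [::])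
  | k'.+1 =>
    let: (xs, ts) := gen s k' in
    let sk := s k in
    let Xi := colsmx k' xs in
    let Th := colsmx k' ts in
    let delta := X *m (row sk X)^T + lam *: (row sk (1%:M : 'M[R]_N))^T
                 - Xi *m (row sk Xi)^T in
    let c := (Num.sqrt (delta sk 0))^-1 in
    let xi := c *: delta in
    let th := c *: (Y *m (row sk X)^T - Th *m (row sk Xi)^T) in
    (rcons xs xi, rcons ts th)
  end.

Definition Xi (s : nat -> 'I_N) (k : nat) : 'M[R]_(N, k) := colsmx k (gen s k).1.
Definition Theta (s : nat -> 'I_N) (k : nat) : 'M[R]_(Ny, k) := colsmx k (gen s k).2.
Definition xi (s : nat -> 'I_N) (k : nat) : 'cV[R]_N := nth 0 (gen s k).1 k.-1.
Definition theta (s : nat -> 'I_N) (k : nat) : 'cV[R]_Ny := nth 0 (gen s k).2 k.-1.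
End Defs.

(* Main.v *)
Require Import Defs.
From mathcomp Require Import all_boot all_order all_algebra.
From mathcomp Require Import reals.
Import Order.TTheory GRing.Theory Num.Theory.
Local Open Scope ring_scope.
Set Implicit Arguments. Unset Strict Implicit. Unset Printing Implicit Defensive.

Section Gen.
Variables (R : realType) (N : nat) (P : 'M[R]_N).

Definition QB n m (F : 'M[R]_(N,m)) (B : 'M[R]_(N,n)) : 'M[R]_(N,n) :=
  B - P *m F *m invmx (F^T *m P *m F) *m (F^T *m B).

Lemma QB_unique n m (F : 'M[R]_(N,m)) (B : 'M[R]_(N,n)) (D : 'M[R]_(m,n)) :
  F^T *m P *m F \in unitmx -> F^T *m (B - P *m F *m D) = 0 ->
  B - P *m F *m D = QB F B.
Proof.
move=> U H; rewrite /QB.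
have HD : F^T *m B = F^T *m P *m F *m D.
  by apply/eqP; rewrite -subr_eq0 -H mulmxBr !mulmxA.
by rewrite HD -(mulmxA (P *m F)) mulKmx.
Qed.

Lemma QB_ann n m (F : 'M[R]_(N,m)) (B : 'M[R]_(N,n)) :
  F^T *m P *m F \in unitmx -> F^T *m QB F B = 0.
Proof.
move=> U; rewrite /QB mulmxBr.
have -> : F^T *m (P *m F *m invmx (F^T *m P *m F) *m (F^T *m B))
   = (F^T *m P *m F *m invmx (F^T *m P *m F)) *m (F^T *m B) by rewrite !mulmxA.
by rewrite mulmxV // mul1mx subrr.
Qed.

Lemma QB_update n m m' (E : 'M[R]_(N,m)) (E' : 'M[R]_(N,m')) (e : 'cV[R]_N)
  (A : 'M[R]_(m',m)) (a : 'cV[R]_m') (B1 : 'M[R]_(m,m')) (b2 : 'rV[R]_m')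
  (B : 'M[R]_(N,n)) :
  E' *m A = E -> E' *m a = e -> E *m B1 + e *m b2 = E' ->
  E^T *m P *m E \in unitmx -> E'^T *m P *m E' \in unitmx ->
  (e^T *m QB E P *m e) 0 0 != 0 ->
  QB E' B = QB E B - ((e^T *m QB E P *m e) 0 0)^-1 *: (QB E P *m e *m (e^T *m QB E B)).
Proof.
move=> HA Ha HB1 U U' d0.
set d := (e^T *m QB E P *m e) 0 0.
set C := invmx (E^T *m P *m E) *m (E^T *m P).
set CB := invmx (E^T *m P *m E) *m (E^T *m B).
have QBE : QB E B = B - P *m E *m CB by rewrite /QB /CB !mulmxA.
have QPe : QB E P *m e = P *m (e - E *m (C *m e)).
  by rewrite /QB /C mulmxBl mulmxBr !mulmxA.
set D := A *m CB + d^-1 *: ((a - A *m (C *m e)) *m (e^T *m QB E B)).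
have eqZ : QB E B - d^-1 *: (QB E P *m e *m (e^T *m QB E B)) = B - P *m E' *m D.
  rewrite QPe {1}QBE /D mulmxDr -addrA opprD; congr (_ + _).
  rewrite (mulmxA (P *m E') A CB) -(mulmxA P E' A) HA; congr (_ - _).
  rewrite -!scalemxAr; congr (_ *: _).
  set c := C *m e; set W := e^T *m QB E B.
  rewrite -!mulmxA; congr (P *m _).
  by rewrite (mulmxA E') mulmxBr (mulmxA E' A) Ha HA.
rewrite eqZ; symmetry; apply: QB_unique => //; rewrite -eqZ.
have h1 : E^T *m (QB E B - d^-1 *: (QB E P *m e *m (e^T *m QB E B))) = 0.
  by rewrite mulmxBr QB_ann // -scalemxAr !mulmxA QB_ann // !mul0mx scaler0 subrr.
have h2 : e^T *m (QB E B - d^-1 *: (QB E P *m e *m (e^T *m QB E B))) = 0.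
  rewrite mulmxBr -scalemxAr !mulmxA [e^T *m QB E P *m e]mx11_scalar -/d.
  by rewrite -mulmxA mul_scalar_mx scalerA mulVf // scale1r subrr.
have -> : E'^T = B1^T *m E^T + b2^T *m e^T.
  by rewrite -HB1 -!trmx_mul; apply/matrixP=> i j; rewrite !mxE.
by rewrite mulmxDl -(mulmxA B1^T) -(mulmxA b2^T) h1 h2 !mulmx0 addr0.
Qed.

Lemma QB_pos m m' (E : 'M[R]_(N,m)) (E' : 'M[R]_(N,m')) (i : 'I_N)
  (A : 'M[R]_(m',m)) (a : 'cV[R]_m') :
  E' *m A = E -> E' *m a = delta_mx i (0 : 'I_1) -> row i E = 0 ->
  E^T *m P *m E \in unitmx ->
  (forall v : 'rV[R]_m', v != 0 -> 0 < (v *m (E'^T *m P *m E') *m v^T) 0 0) ->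
  0 < ((delta_mx i (0 : 'I_1))^T *m QB E P *m delta_mx i (0 : 'I_1)) 0 0.
Proof.
move=> HA Ha Hr U Hpd.
set e : 'cV_N := delta_mx i (0 : 'I_1).
set c := invmx (E^T *m P *m E) *m (E^T *m P) *m e.
set w := e - E *m c.
have QPe : QB E P *m e = P *m w.
  by rewrite /QB /w /c mulmxBl mulmxBr !mulmxA.
have Ew : E' *m (a - A *m c) = w by rewrite mulmxBr mulmxA HA Ha.
have EPw : E^T *m (P *m w) = 0.
  rewrite /w /c mulmxBr mulmxBr !mulmxA.
  by rewrite mulmxV // mul1mx subrr.
have wi : w i 0 = 1.
  rewrite /w !mxE eqxx /=.
  rewrite big1 ?subr0 // => j _.
  by have := congr1 (fun M : 'rV[R]_m => M 0 j) Hr; rewrite !mxE => ->; rewrite mul0r.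
have nz : (a - A *m c)^T != 0.
  apply/eqP => h; move: wi; rewrite -Ew -(trmxK (a - A *m c)) h.
  by rewrite linear0 mulmx0 mxE => /eqP; rewrite eq_sym oner_eq0.
have := Hpd _ nz.
suff -> : (a - A *m c)^T *m (E'^T *m P *m E') *m (a - A *m c)^T^T
   = e^T *m QB E P *m e by [].
have -> : (a - A *m c)^T *m (E'^T *m P *m E') *m (a - A *m c)^T^T = w^T *m P *m w.
  by rewrite trmxK -Ew trmx_mul !mulmxA.
rewrite -(mulmxA e^T) QPe -(mulmxA w^T).
have -> : w^T = e^T - c^T *m E^T.
  by rewrite /w -trmx_mul; apply/matrixP=> p q; rewrite !mxE.
by rewrite mulmxBl -mulmxA EPw mulmx0 subr0.
Qed.
End Gen.

Section Sel.
Variables (R : realType) (N : nat).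

Definition sel (S : {set 'I_N}) : 'M[R]_(N, #|S|) :=
  \matrix_(x < N, j < #|S|) (x == enum_val j)%:R.

Lemma sum_sel (S : {set 'I_N}) x (g : 'I_N -> R) :
  \sum_(l < #|S|) (x == enum_val l)%:R * g (enum_val l) = (x \in S)%:R * g x.
Proof.
rewrite -(big_enum_val (fun y => (x == y)%:R * g y)) /=.
case: (boolP (x \in S)) => xS.
  rewrite (bigD1 x) //= eqxx mul1r big1 ?addr0 ?mul1r // => y /andP[_ /negbTE].
  by rewrite eq_sym => ->; rewrite mul0r.
rewrite big1 ?mul0r // => y yS.
have -> : (x == y) = false by apply/eqP => exy; rewrite exy yS in xS.
by rewrite mul0r.
Qed.

Lemma sum_delta (x : 'I_N) (g : 'I_N -> R) :
  \sum_(y < N) (y == x)%:R * g y = g x.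
Proof.
rewrite (bigD1 x) //= eqxx mul1r big1 ?addr0 // => y /negbTE ->.
by rewrite mul0r.
Qed.

Lemma rows_sel n (A : 'M[R]_(N, n)) S : rows_of A S = (sel S)^T *m A.
Proof.
apply/matrixP => i j; rewrite !mxE.
under eq_bigr do rewrite !mxE.
by rewrite sum_delta.
Qed.

Lemma subsq_sel (A : 'M[R]_N) S : subsq A S = (sel S)^T *m A *m sel S.
Proof.
apply/matrixP => i j; rewrite -rows_sel !mxE.
under eq_bigr do rewrite !mxE.
under eq_bigr do rewrite mulrC.
by rewrite sum_delta.
Qed.

Lemma row_sel0 (S : {set 'I_N}) i : i \notin S -> row i (sel S) = 0.
Proof.
move=> iS; apply/matrixP => a j; rewrite !mxE.
have -> : (i == enum_val j) = false.
  by apply/eqP => h; move: iS; rewrite h enum_valP.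
done.
Qed.

Section Ext.
Variables (S : {set 'I_N}) (i : 'I_N).
Hypothesis iS : i \notin S.
Let S' := i |: S.

Definition Amx : 'M[R]_(#|S'|, #|S|) :=
  \matrix_(l, j) (enum_val l == enum_val j)%:R.
Definition amx : 'cV[R]_(#|S'|) := \matrix_(l, j) (enum_val l == i)%:R.
Definition B1mx : 'M[R]_(#|S|, #|S'|) :=
  \matrix_(j, l) (enum_val j == enum_val l)%:R.
Definition b2mx : 'rV[R]_(#|S'|) := \matrix_(j, l) (i == enum_val l)%:R.

Lemma selA : sel S' *m Amx = sel S.
Proof.
apply/matrixP => x j; rewrite !mxE.
under eq_bigr do rewrite !mxE.
rewrite (sum_sel S' x (fun y => (y == enum_val j)%:R)).
case: eqP => [->|_]; last by rewrite mulr0.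
by rewrite !inE enum_valP orbT mulr1.
Qed.

Lemma sela : sel S' *m amx = delta_mx i (0 : 'I_1).
Proof.
apply/matrixP => x j; rewrite !mxE.
under eq_bigr do rewrite !mxE.
rewrite (sum_sel S' x (fun y => (y == i)%:R)) (ord1 j) eqxx andbT.
case: eqP => [->|_]; last by rewrite mulr0.
by rewrite !inE eqxx mulr1.
Qed.

Lemma selB : sel S *m B1mx + delta_mx i (0 : 'I_1) *m b2mx = sel S'.
Proof.
apply/matrixP => x l; rewrite !mxE.
under eq_bigr do rewrite !mxE.
rewrite (sum_sel S x (fun y => (y == enum_val l)%:R)) big_ord1 !mxE eqxx andbT.
have : enum_val l \in S' by apply: enum_valP.
rewrite !inE.
case: (eqVneq x (enum_val l)) => [<-|nx].
  case: (eqVneq x i) => [->|xi] /=.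
    by rewrite (negbTE iS) mul0r add0r mulr1.
  by move=> ->; rewrite mulr1 mul0r addr0.
move=> _; rewrite mulr0 add0r; case: (eqVneq x i) => [ei|_]; last by rewrite mul0r.
by move: nx; rewrite ei => /negbTE ->; rewrite mulr0.
Qed.
End Ext.
End Sel.

Lemma trmxD' (R : realType) n m (A B : 'M[R]_(n,m)) : (A + B)^T = A^T + B^T.
Proof. exact: (raddfD (@trmx R n m)). Qed.
Lemma trmxB' (R : realType) n m (A B : 'M[R]_(n,m)) : (A - B)^T = A^T - B^T.
Proof. exact: (raddfB (@trmx R n m)). Qed.
Lemma rowB' (R : realType) n m (A B : 'M[R]_(n,m)) i : row i (A - B) = row i A - row i B.
Proof. exact: (raddfB (row i)). Qed.
Lemma rowD' (R : realType) n m (A B : 'M[R]_(n,m)) i : row i (A + B) = row i A + row i B.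
Proof. exact: (raddfD (row i)). Qed.

Lemma posdef_unit (R : realType) n (A : 'M[R]_n) : posdef A -> A \in unitmx.
Proof.
case=> _ H; rewrite unitmxE unitfE; apply/negP => /det0P [v nv vA].
by have := H v nv; rewrite vA mul0mx mxE ltxx.
Qed.

Lemma unit0 (R : realType) n (A : 'M[R]_n) : n = 0%N -> A \in unitmx.
Proof. by move=> n0; subst n; rewrite unitmxE det_mx00 unitr1. Qed.

Section Main.
Variables (R : realType) (N Ny M : nat) (X : 'M[R]_(N, M)) (Y : 'M[R]_(Ny, M)).
Variables (lam : R) (s : nat -> 'I_N) (p : nat).
Hypothesis gr : greedy X Y lam p s.
Local Notation P := (Pxx X lam).

Lemma Pxx_sym : P^T = P.
Proof. by rewrite /Pxx trmxD' trmx_mul trmxK tr_scalar_mx. Qed.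

Lemma Qxx_QB S : Qxx X lam S = QB P (sel R S) P.
Proof. by rewrite /Qxx /QB rows_sel subsq_sel trmx_mul trmxK Pxx_sym !mulmxA. Qed.

Lemma Qxy_QB S : Qxy X Y lam S = QB P (sel R S) (Pxy X Y).
Proof. by rewrite /Qxy /QB !rows_sel subsq_sel trmx_mul trmxK Pxx_sym !mulmxA. Qed.

Lemma Sbar0 : Sbar s 0 = set0.
Proof. by apply/setP => x; rewrite !inE; apply/existsP; case=> -[]. Qed.

Lemma SbarS k : Sbar s k.+1 = s k.+1 |: Sbar s k.
Proof.
apply/setP => x; rewrite !inE; apply/existsP/orP.
  case=> j /eqP ->; case: (ltnP j k) => jk.
    by right; apply/existsP; exists (Ordinal jk).
  have -> : (j : nat) = k by apply/eqP; rewrite eqn_leq jk -ltnS ltn_ord.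
  by left.
case=> [/eqP ->|/existsP [j /eqP ->]]; first by exists ord_max.
by exists (widen_ord (leqnSn k) j).
Qed.

Lemma unitG k : (k <= p)%N -> (sel R (Sbar s k))^T *m P *m sel R (Sbar s k) \in unitmx.
Proof.
case: k => [|k] kp.
  by apply: unit0; rewrite Sbar0 cards0.
have [_ pd _] := gr (k := k.+1) kp.
by rewrite -subsq_sel SbarS; apply: posdef_unit.
Qed.

Lemma step k : (k < p)%N ->
  let Q := Qxx X lam (Sbar s k) in let i := s k.+1 in
  [/\ 0 < Q i i,
      Qxx X lam (Sbar s k.+1) = Q - (Q i i)^-1 *: (col i Q *m row i Q) &
      Qxy X Y lam (Sbar s k.+1) = Qxy X Y lam (Sbar s k)
          - (Q i i)^-1 *: (col i Q *m row i (Qxy X Y lam (Sbar s k)))].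
Proof.
move=> kp Q i.
have [iS pd _] := gr (k := k.+1) kp.
rewrite /= in iS pd.
have UG := unitG (ltnW kp).
have UG' : (sel R (Sbar s k.+1))^T *m P *m sel R (Sbar s k.+1) \in unitmx.
  by apply: unitG.
have dE : ((delta_mx i (0 : 'I_1))^T *m QB P (sel R (Sbar s k)) P *m delta_mx i (0 : 'I_1)) 0 0 = Q i i.
  by rewrite -Qxx_QB -/Q trmx_delta -rowE -colE !mxE.
have pos : 0 < Q i i.
  have := QB_pos (selA R (Sbar s k) i) (sela R (Sbar s k) i) (row_sel0 R iS) UG.
  rewrite dE; apply.
  by move=> v; rewrite -subsq_sel; case: pd => _; apply.
have dnz : ((delta_mx i (0 : 'I_1))^T *m QB P (sel R (Sbar s k)) P *m delta_mx i (0 : 'I_1)) 0 0 != 0.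
  by rewrite dE lt0r_neq0.
split => //.
  rewrite !Qxx_QB SbarS (QB_update _ (selA R (Sbar s k) i) (sela R (Sbar s k) i) (selB R iS) UG _ dnz).
    by rewrite dE -Qxx_QB -/Q -colE trmx_delta -rowE.
  by rewrite -SbarS.
rewrite !Qxy_QB SbarS (QB_update _ (selA R (Sbar s k) i) (sela R (Sbar s k) i) (selB R iS) UG _ dnz).
  by rewrite dE -Qxx_QB -/Q -colE trmx_delta -rowE.
by rewrite -SbarS.
Qed.

End Main.

Section Main2.
Variables (R : realType) (N Ny M : nat) (X : 'M[R]_(N, M)) (Y : 'M[R]_(Ny, M)).
Variables (lam : R) (s : nat -> 'I_N) (p : nat).
Hypothesis gr : greedy X Y lam p s.
Local Notation P := (Pxx X lam).

Lemma colsmx_rcons n n' k (xs : seq 'cV[R]_n) (ys : seq 'cV[R]_n') x y :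
  size xs = k -> size ys = k ->
  colsmx k.+1 (rcons xs x) *m (colsmx k.+1 (rcons ys y))^T
  = colsmx k xs *m (colsmx k ys)^T + x *m y^T.
Proof.
move=> sx sy; apply/matrixP => a b; rewrite !mxE big_ord_recr /=; congr (_ + _).
  by apply: eq_bigr => j _; rewrite !mxE !nth_rcons sx sy /= ltn_ord.
by rewrite !mxE !nth_rcons sx sy ltnn eqxx big_ord1 !mxE.
Qed.

Lemma gen_S k :
  let i := s k.+1 in
  let dlt := X *m (row i X)^T + lam *: (row i (1%:M : 'M[R]_N))^T
             - Xi X Y lam s k *m (row i (Xi X Y lam s k))^T in
  let c := (Num.sqrt (dlt i 0))^-1 in
  let thv := Y *m (row i X)^T - Theta X Y lam s k *m (row i (Xi X Y lam s k))^T in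
  gen X Y lam s k.+1 = (rcons (gen X Y lam s k).1 (c *: dlt),
                        rcons (gen X Y lam s k).2 (c *: thv)).
Proof. by rewrite /Xi /Theta /=; case: (gen X Y lam s k). Qed.

Lemma size_gen k : size (gen X Y lam s k).1 = k /\ size (gen X Y lam s k).2 = k.
Proof.
elim: k => [|k [IH1 IH2]]; first by [].
by rewrite gen_S /= !size_rcons IH1 IH2.
Qed.

Lemma full k : (k < p)%N ->
  Qxx X lam (Sbar s k) = P - Xi X Y lam s k *m (Xi X Y lam s k)^T ->
  Qxy X Y lam (Sbar s k) = Pxy X Y - Xi X Y lam s k *m (Theta X Y lam s k)^T ->
  let S := Sbar s k in let i := s k.+1 in
  let c := (Num.sqrt (Qxx X lam S i i))^-1 in
  [/\ xi X Y lam s k.+1 = c *: (row i (Qxx X lam S))^T,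
      theta X Y lam s k.+1 = c *: (row i (Qxy X Y lam S))^T,
      Qxx X lam (Sbar s k.+1) = Qxx X lam S - xi X Y lam s k.+1 *m (xi X Y lam s k.+1)^T
        /\
      Qxx X lam (Sbar s k.+1) = P - Xi X Y lam s k.+1 *m (Xi X Y lam s k.+1)^T &
      Qxy X Y lam (Sbar s k.+1) = Qxy X Y lam S - xi X Y lam s k.+1 *m (theta X Y lam s k.+1)^T
        /\
      Qxy X Y lam (Sbar s k.+1) = Pxy X Y - Xi X Y lam s k.+1 *m (Theta X Y lam s k.+1)^T].
Proof.
move=> kp IH IHy S i c.
have [pos EQ EQy] := step gr kp.
rewrite -/S -/i in pos EQ EQy.
set Q := Qxx X lam S in pos EQ EQy c *.
set Qy := Qxy X Y lam S in EQy *.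
have sym : Q^T = Q by rewrite /Q IH trmxB' trmx_mul trmxK Pxx_sym.
have colQ : col i Q = (row i Q)^T by rewrite tr_row sym.
set Xk := Xi X Y lam s k.
set Tk := Theta X Y lam s k.
have dltE : X *m (row i X)^T + lam *: (row i (1%:M : 'M[R]_N))^T
             - Xk *m (row i Xk)^T = (row i Q)^T.
  rewrite /Q IH rowB' trmxB' row_mul trmx_mul trmxK /Pxx rowD' trmxD'.
  rewrite row_mul trmx_mul trmxK -/Xk; congr (_ + _ - _).
  by apply/matrixP => a b; rewrite !mxE; case: eqP; rewrite ?mulr1 ?mulr0.
have thvE : Y *m (row i X)^T - Tk *m (row i Xk)^T = (row i Qy)^T.
  by rewrite /Qy IHy /Pxy rowB' trmxB' !row_mul !trmx_mul !trmxK.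
have cE : (Num.sqrt (((row i Q)^T) i 0))^-1 = c by rewrite /c !mxE.
have [s1 s2] := size_gen k.
have xiE : xi X Y lam s k.+1 = c *: (row i Q)^T.
  by rewrite /xi gen_S /= -/i -/Xk dltE cE nth_rcons s1 ltnn eqxx.
have thE : theta X Y lam s k.+1 = c *: (row i Qy)^T.
  by rewrite /theta gen_S /= -/i -/Xk -/Tk dltE thvE cE nth_rcons s2 ltnn eqxx.
have XiE : Xi X Y lam s k.+1 *m (Xi X Y lam s k.+1)^T
           = Xk *m Xk^T + xi X Y lam s k.+1 *m (xi X Y lam s k.+1)^T.
  rewrite /Xi /xi gen_S /= colsmx_rcons // nth_rcons s1 ltnn eqxx.
  by rewrite -/i -/Xk.
have ThE : Xi X Y lam s k.+1 *m (Theta X Y lam s k.+1)^T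
           = Xk *m Tk^T + xi X Y lam s k.+1 *m (theta X Y lam s k.+1)^T.
  rewrite /Xi /Theta /xi /theta gen_S /= colsmx_rcons // nth_rcons s1 ltnn eqxx.
  by rewrite nth_rcons s2 ltnn eqxx -/i -/Xk -/Tk.
have trZ : forall n (a : R) (v : 'cV[R]_n), (a *: v)^T = a *: v^T.
  by move=> n a v; apply/matrixP => u w; rewrite !mxE.
have cc : c * c = (Q i i)^-1.
  by rewrite /c -invfM -expr2 sqr_sqrtr // ltW.
have xixi : xi X Y lam s k.+1 *m (xi X Y lam s k.+1)^T
            = (Q i i)^-1 *: (col i Q *m row i Q).
  by rewrite xiE trZ trmxK -scalemxAl -scalemxAr scalerA cc colQ.
have xith : xi X Y lam s k.+1 *m (theta X Y lam s k.+1)^T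
            = (Q i i)^-1 *: (col i Q *m row i Qy).
  by rewrite xiE thE trZ trmxK -scalemxAl -scalemxAr scalerA cc colQ.
split => //.
  rewrite EQ xixi; split => //.
  by rewrite XiE xixi opprD addrA /Xk -IH.
rewrite EQy xith; split => //.
by rewrite ThE xith opprD addrA /Xk /Tk -IHy.
Qed.

Lemma main k : (k <= p)%N ->
  Qxx X lam (Sbar s k) = P - Xi X Y lam s k *m (Xi X Y lam s k)^T /\
  Qxy X Y lam (Sbar s k) = Pxy X Y - Xi X Y lam s k *m (Theta X Y lam s k)^T.
Proof.
elim: k => [|k IH] kp.
  have z : forall n (A : 'M[R]_(N,n)), n = 0%N -> A = 0.
    by move=> n A n0; subst n; exact: thinmx0.
  have h1 : (rows_of P set0)^T = 0 by apply: z; rewrite cards0.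
  have h2 : Xi X Y lam s 0 = 0 by apply: z.
  rewrite /Qxx /Qxy Sbar0 h1 h2 !mul0mx !subr0; split => //.
have kp' : (k < p)%N by [].
have [IH1 IH2] := IH (ltnW kp').
by have [_ _ [_ ->] [_ ->]] := full kp' IH1 IH2.
Qed.
End Main2.

Unset Implicit Arguments.
Set Strict Implicit.

Theorem lemma3 (R : realType) (N Ny M p : nat) (X : 'M[R]_(N, M)) (Y : 'M[R]_(Ny, M))
  (lam : R) (s : nat -> 'I_N) :
  (p <= N)%N -> 0 <= lam -> greedy X Y lam p s ->
  forall k, (0 < k <= p)%N ->
    let S := Sbar s k.-1 in
    let c := (Num.sqrt (Qxx X lam S (s k) (s k)))^-1 in
    [/\ xi X Y lam s k = c *: (row (s k) (Qxx X lam S))^T,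
        theta X Y lam s k = c *: (row (s k) (Qxy X Y lam S))^T,
        Qxx X lam (Sbar s k) = Qxx X lam S - xi X Y lam s k *m (xi X Y lam s k)^T
          /\
        Qxx X lam (Sbar s k) = Pxx X lam - Xi X Y lam s k *m (Xi X Y lam s k)^T &
        Qxy X Y lam (Sbar s k) = Qxy X Y lam S - xi X Y lam s k *m (theta X Y lam s k)^T
          /\
        Qxy X Y lam (Sbar s k) = Pxy X Y - Xi X Y lam s k *m (Theta X Y lam s k)^T].
Proof.
move=> _ _ gr [//|k] /= kp.
have [IH1 IH2] := main gr (ltnW kp).
by have := full gr kp IH1 IH2.
Qed.
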